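(* Let $3\leq d_A\leq d_B\leq d_C$ be integers and consider the tripartite system $\mathbb{C}^{d_A}\otimes\mathbb{C}^{d_B}\otimes\mathbb{C}^{d_C}$. Then the set of (unnormalized) product states $\mathcal{U}=\bigcup_{i=1}^3(\mathcal{A}_i\cup\mathcal{B}_i)\cup\mathcal{F}\cup\{|S\rangle\}$ defined in the context is an unextendible product basis of size $d_Ad_Bd_C-8$.
   Context: $\{|0\rangle,\dots,|d_X-1\rangle\}$ is the computational basis of party $X\in\{A,B,C\}$, $\mathbb{Z}_n=\{0,1,\dots,n-1\}$, and $w_n=e^{2\pi\sqrt{-1}/n}$. For $X\in\{A,B,C\}$ define $|\eta_s\rangle_X=\sum_{t=0}^{d_X-2}w_{d_X-1}^{st}|t\rangle_X$ and $|\xi_s\rangle_X=\sum_{t=0}^{d_X-2}w_{d_X-1}^{st}|t+1\rangle_X$ for $s\in\mathbb{Z}_{d_X-1}$, and $|\beta_s\rangle_X=\sum_{t=0}^{d_X-3}w_{d_X-2}^{st}|t+1\rangle_X$ for $s\in\mathbb{Z}_{d_X-2}$. Define $\mathcal{A}_1=\{|\xi_i\rangle_A|0\rangle_B|\eta_k\rangle_C:(i,k)\in\mathbb{Z}_{d_A-1}\times\mathbb{Z}_{d_C-1}\setminus\{(0,0)\}\}$, $\mathcal{A}_2=\{|\xi_i\rangle_A|\eta_j\rangle_B|d_C-1\rangle_C:(i,j)\in\mathbb{Z}_{d_A-1}\times\mathbb{Z}_{d_B-1}\setminus\{(0,0)\}\}$, $\mathcal{A}_3=\{|d_A-1\rangle_A|\xi_j\rangle_B|\eta_k\rangle_C:(j,k)\in\mathbb{Z}_{d_B-1}\times\mathbb{Z}_{d_C-1}\setminus\{(0,0)\}\}$,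 $\mathcal{B}_1=\{|\eta_i\rangle_A|d_B-1\rangle_B|\xi_k\rangle_C:(i,k)\in\mathbb{Z}_{d_A-1}\times\mathbb{Z}_{d_C-1}\setminus\{(0,0)\}\}$, $\mathcal{B}_2=\{|\eta_i\rangle_A|\xi_j\rangle_B|0\rangle_C:(i,j)\in\mathbb{Z}_{d_A-1}\times\mathbb{Z}_{d_B-1}\setminus\{(0,0)\}\}$, $\mathcal{B}_3=\{|0\rangle_A|\eta_j\rangle_B|\xi_k\rangle_C:(j,k)\in\mathbb{Z}_{d_B-1}\times\mathbb{Z}_{d_C-1}\setminus\{(0,0)\}\}$, $\mathcal{F}=\{|\beta_i\rangle_A|\beta_j\rangle_B|\beta_k\rangle_C:(i,j,k)\in\mathbb{Z}_{d_A-2}\times\mathbb{Z}_{d_B-2}\times\mathbb{Z}_{d_C-2}\setminus\{(0,0,0)\}\}$, and the ''stopper'' state $|S\rangle=(\sum_{i=0}^{d_A-1}|i\rangle)_A(\sum_{j=0}^{d_B-1}|j\rangle)_B(\sum_{k=0}^{d_C-1}|k\rangle)_C$. An unextendible product basis (UPB) of a multipartite system is a set of mutually orthogonal product states, not spanning the whole space, whose orthogonal complement contains no (fully) product state. *)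

(* Defs.v *)
From HB Require Import structures.
From mathcomp Require Import all_boot all_order all_algebra.
From mathcomp Require Import complex.
From mathcomp Require Import Rstruct.
From Stdlib Require Import Reals.
Import GRing.Theory Num.Theory.
Local Open Scope ring_scope.

Definition CC := complex R.

Definition w (n : nat) : CC :=
  Complex (Rtrigo_def.cos (2 * PI / INR n)%R) (Rtrigo_def.sin (2 * PI / INR n)%R).

(* computational basis vector |t>, for a natural number t (zero if t >= d). *)
Definition ket (d t : nat) : 'I_d -> CC := fun x => if nat_of_ord x == t then 1 else 0.

Definition eta (d s : nat) : 'I_d -> CC :=
  fun x => \sum_(t < d.-1) w d.-1 ^+ (s * t) * ket d t x.
Definition xi (d s : nat) : 'I_d -> CC :=
  fun x => \sum_(t < d.-1) w d.-1 ^+ (s * t) * ket d t.+1 x.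
Definition beta (d s : nat) : 'I_d -> CC :=
  fun x => \sum_(t < d.-2) w d.-2 ^+ (s * t) * ket d t.+1 x.
Definition allones (d : nat) : 'I_d -> CC := fun x => \sum_(t < d) ket d t x.

Definition tri (dA dB dC : nat) := {ffun 'I_dA * 'I_dB * 'I_dC -> CC}.

Definition prod3 {dA dB dC : nat} (a : 'I_dA -> CC) (b : 'I_dB -> CC) (c : 'I_dC -> CC)
  : tri dA dB dC := [ffun x => a x.1.1 * b x.1.2 * c x.2].

Definition inner {dA dB dC : nat} (u v : tri dA dB dC) : CC :=
  \sum_x (u x)^* * v x.

Definition product_state {dA dB dC : nat} (v : tri dA dB dC) : Prop :=
  v != 0 /\ exists a b c, v = prod3 a b c.

Definition spans_all {dA dB dC : nat} (U : seq (tri dA dB dC)) : Prop :=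
  forall v : tri dA dB dC, exists coef : nat -> CC,
    forall x, v x = \sum_(i < size U) coef i * (nth v U i) x.

Definition is_UPB {dA dB dC : nat} (U : seq (tri dA dB dC)) : Prop :=
  [/\ (forall u, u \in U -> product_state u),
      (forall u v, u \in U -> v \in U -> u != v -> inner u v = 0),
      ~ spans_all U &
      (forall v, product_state v -> exists2 u, u \in U & inner u v != 0)].

Definition pairs0 (m n : nat) : seq (nat * nat) :=
  [seq p <- [seq (i, k) | i <- iota 0 m, k <- iota 0 n] | p != (0, 0)%N].
Definition triples0 (m n l : nat) : seq (nat * nat * nat) :=
  [seq p <- [seq (ij, k) | ij <- [seq (i, j) | i <- iota 0 m, j <- iota 0 n], k <- iota 0 l]
     | p != (0, 0, 0)%N].

Section Sets.
Variables dA dB dC : nat.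
Definition A1 : seq (tri dA dB dC) :=
  [seq prod3 (xi dA p.1) (ket dB 0) (eta dC p.2) | p <- pairs0 dA.-1 dC.-1].
Definition A2 : seq (tri dA dB dC) :=
  [seq prod3 (xi dA p.1) (eta dB p.2) (ket dC dC.-1) | p <- pairs0 dA.-1 dB.-1].
Definition A3 : seq (tri dA dB dC) :=
  [seq prod3 (ket dA dA.-1) (xi dB p.1) (eta dC p.2) | p <- pairs0 dB.-1 dC.-1].
Definition B1 : seq (tri dA dB dC) :=
  [seq prod3 (eta dA p.1) (ket dB dB.-1) (xi dC p.2) | p <- pairs0 dA.-1 dC.-1].
Definition B2 : seq (tri dA dB dC) :=
  [seq prod3 (eta dA p.1) (xi dB p.2) (ket dC 0) | p <- pairs0 dA.-1 dB.-1].
Definition B3 : seq (tri dA dB dC) :=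
  [seq prod3 (ket dA 0) (eta dB p.1) (xi dC p.2) | p <- pairs0 dB.-1 dC.-1].
Definition FF : seq (tri dA dB dC) :=
  [seq prod3 (beta dA p.1.1) (beta dB p.1.2) (beta dC p.2) | p <- triples0 dA.-2 dB.-2 dC.-2].
Definition stopper : tri dA dB dC := prod3 (allones dA) (allones dB) (allones dC).
Definition UU : seq (tri dA dB dC) :=
  A1 ++ A2 ++ A3 ++ B1 ++ B2 ++ B3 ++ FF ++ [:: stopper].
End Sets.

(* Main.v *)
From Stdlib Require Import Reals Lra Lia.
Require Import Defs.
From HB Require Import structures.
From mathcomp Require Import all_boot all_order all_algebra.
From mathcomp Require Import complex Rstruct zify.
Import GRing.Theory Num.Theory.
Local Open Scope ring_scope.
Lemma onecE : (1 : CC) = Complex 1 0.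
Proof. reflexivity. Qed.
Lemma mulcE (a b c d : R) : (Complex a b : CC) * Complex c d = Complex (a * c - b * d) (a * d + b * c).
Proof. reflexivity. Qed.
Definition th (N : nat) : R := Rdiv (Rmult 2 PI) (INR N).

Lemma w_exp N k : w N ^+ k = Complex (cos (Rmult (INR k) (th N))) (sin (Rmult (INR k) (th N))).
Proof.
elim: k => [|k IH].
  rewrite expr0 [INR 0]/= (Rmult_0_l (th N)) cos_0 sin_0.
  exact: onecE.
rewrite exprSr IH [w N]/w mulcE (S_INR k) (Rmult_plus_distr_r (INR k) 1 (th N)) (Rmult_1_l (th N)).
rewrite (cos_plus (INR k * th N) (th N)) (sin_plus (INR k * th N) (th N)).
rewrite /th. congr Complex.
rewrite Rplus_comm. reflexivity.
Qed.

Lemma w_N {N} : (0 < N)%N -> w N ^+ N = 1.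
Proof.
move=> N0; rewrite w_exp.
have -> : Rmult (INR N) (th N) = Rmult 2 PI.
  rewrite /th; field; apply: not_0_INR; lia.
by rewrite cos_2PI sin_2PI.
Qed.

Lemma w_k {N k} : (0 < k)%N -> (k < N)%N -> w N ^+ k != 1.
Proof.
move=> k0 kN; rewrite w_exp onecE; apply/eqP => [[Hc Hs]].
have HN : Rlt 0 (INR N) by apply: lt_0_INR; lia.
have Hk : Rlt 0 (INR k) by apply: lt_0_INR; lia.
have HkN : Rlt (INR k) (INR N) by apply: lt_INR; lia.
set x := Rmult (INR k) (th N) in Hc Hs.
have x0 : Rlt 0 x.
  rewrite /x /th. apply: Rmult_lt_0_compat => //. 
  apply: Rdiv_lt_0_compat => //. have := PI_RGT_0. lra.
have x2 : Rlt x (Rmult 2 PI).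
  rewrite /x /th. have := PI_RGT_0 => Hp.
  apply (Rmult_lt_reg_r (INR N)) => //.
  have -> : Rmult (Rmult (INR k) (Rdiv (Rmult 2 PI) (INR N))) (INR N) = Rmult (INR k) (Rmult 2 PI).
    field; lra.
  nra.
have Hs' : sin x = R0 := Hs. have Hc' : cos x = R1 := Hc.
case: (Rtotal_order x PI) => [xl|[xe|xg]].
  - have := sin_gt_0 x x0 xl. lra.
- move: Hc'; rewrite xe cos_PI. lra.
- have := sin_lt_0 x xg x2. lra.
Qed.

Lemma w_prim N : (0 < N)%N -> N.-primitive_root (w N).
Proof.
move=> N0; have [m pm mN] := prim_order_exists N0 (w_N N0).
have m0 := prim_order_gt0 pm.
have mleN : (m <= N)%N by apply: dvdn_leq.
case: (ltnP m N) => [mltN|NleM].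
  by have := w_k m0 mltN; rewrite (prim_expr_order pm) eqxx.
have e : m = N by apply/eqP; rewrite eqn_leq mleN NleM.
by move: pm; rewrite e.
Qed.

Lemma conjw_w N : (w N)^* * w N = 1.
Proof.
rewrite [w N]/w onecE.
set x := Rdiv (Rmult 2 PI) (INR N).
have H := sin2_cos2 x. rewrite /Rsqr in H.
change (Complex (cos x) (- sin x) * Complex (cos x) (sin x) = Complex 1 0).
rewrite mulcE. congr Complex.
  change (Rplus (Rmult (cos x) (cos x)) (Ropp (Rmult (Ropp (sin x)) (sin x))) = R1). lra.
change (Rplus (Rmult (cos x) (sin x)) (Rmult (Ropp (sin x)) (cos x)) = R0). lra.
Qed.

Lemma w_neq0 N : w N != 0.
Proof. by apply/eqP => h; have := conjw_w N; rewrite h mulr0 => /eqP; rewrite eq_sym oner_eq0. Qed.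

Lemma conj_w {N} : (0 < N)%N -> (w N)^* = w N ^+ N.-1.
Proof.
move=> N0; apply: (mulIf (w_neq0 N)); rewrite conjw_w -exprSr prednK //.
by rewrite w_N.
Qed.

Lemma key {N s s'} : (0 < N)%N -> (s < N)%N -> (s' < N)%N ->
  \sum_(t < N) (w N ^+ (s * t))^* * w N ^+ (s' * t) = if s == s' then N%:R else 0.
Proof.
move=> N0 sN s'N.
set z := w N ^+ (N.-1 * s + s').
have E : forall t, (w N ^+ (s * t))^* * w N ^+ (s' * t) = z ^+ t.
  move=> t; rewrite rmorphXn /= (conj_w N0) -exprM -exprM -exprD; congr (_ ^+ _).
  by rewrite mulnDl mulnA.
under eq_bigr => t _ do rewrite E.
have zN : z ^+ N = 1.
  by rewrite /z -exprM mulnC exprM (w_N N0) expr1n.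
have pr := w_prim N N0.
have zE : (z == 1) = (s == s').
  rewrite -(expr0 (w N)) (eq_prim_root_expr pr).
  rewrite -(eqn_modDr s) add0n -addnA (addnC s') addnA -{2}(prednK N0) -mulSnr.
  by rewrite prednK // mulnC modnMDl !modn_small // eq_sym.
case: eqP => [ss'|ss'].
  have /eqP z1 : z == 1 by rewrite zE ss'.
  by rewrite z1 (eq_bigr (fun _ => 1)) ?sumr_const ?card_ord // => t _; rewrite expr1n.
have z1 : z - 1 != 0 by rewrite subr_eq0 zE; apply/eqP.
apply: (mulfI z1); rewrite -subrX1 zN subrr mulr0 //.
Qed.

Definition ipv {d} (u v : 'I_d -> CC) : CC := \sum_(x : 'I_d) (u x)^* * v x.
Definition coord {d} (a : 'I_d -> CC) (t : nat) : CC := \sum_(x : 'I_d) ket d t x * a x.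
Definition FT (N : nat) (g : nat -> CC) (s : nat) : CC :=
  \sum_(t < N) (w N ^+ (s * t))^* * g t.

Lemma conj_sum (I : finType) (F : I -> CC) : (\sum_i F i)^* = \sum_i (F i)^*.
Proof. exact: rmorph_sum. Qed.
Lemma conj_mul (x y : CC) : (x * y)^* = x^* * y^*.
Proof. exact: rmorphM. Qed.
Lemma conj_exp (x : CC) n : (x ^+ n)^* = x^* ^+ n.
Proof. exact: rmorphXn. Qed.

Lemma conj_ket d k x : (ket d k x)^* = ket d k x.
Proof. by rewrite /ket; case: eqP; rewrite ?conjC1 ?conjC0. Qed.

Lemma ip_comb d L (c : nat -> CC) (h : nat -> nat) (a : 'I_d -> CC) :
  ipv (fun x => \sum_(t < L) c t * ket d (h t) x) a = \sum_(t < L) (c t)^* * coord a (h t).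
Proof.
rewrite /ipv /coord.
under eq_bigr => x _ do rewrite conj_sum mulr_suml.
rewrite exchange_big; apply: eq_bigr => t _; rewrite mulr_sumr; apply: eq_bigr => x _.
by rewrite conj_mul conj_ket mulrA.
Qed.

Lemma coord_comb d L (c : nat -> CC) (h : nat -> nat) t :
  coord (fun x : 'I_d => \sum_(r < L) c r * ket d (h r) x) t = \sum_(r < L) c r * coord (ket d (h r)) t.
Proof.
rewrite /coord.
under eq_bigr => x _ do rewrite mulr_sumr.
rewrite exchange_big; apply: eq_bigr => r _; rewrite mulr_sumr; apply: eq_bigr => x _.
by rewrite mulrCA.
Qed.

Lemma coord_ext d (a b : 'I_d -> CC) t : (forall x, a x = b x) -> coord a t = coord b t.
Proof. by move=> H; rewrite /coord; apply: eq_bigr => x _; rewrite H. Qed.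
Lemma ipv_ext d (a b c : 'I_d -> CC) : (forall x, a x = b x) -> ipv a c = ipv b c.
Proof. by move=> H; rewrite /ipv; apply: eq_bigr => x _; rewrite H. Qed.

Lemma coord_lt d (a : 'I_d -> CC) t (H : (t < d)%N) : coord a t = a (Ordinal H).
Proof.
rewrite /coord (bigD1 (Ordinal H)) //= /ket eqxx mul1r big1 ?addr0 // => x xne.
rewrite ifN ?mul0r //; apply: contra xne => /eqP e; apply/eqP; exact: val_inj.
Qed.

Lemma coord_ge d (a : 'I_d -> CC) t : (d <= t)%N -> coord a t = 0.
Proof.
move=> dt; rewrite /coord big1 // => x _; rewrite /ket ifN ?mul0r //.
by apply/eqP => e; move: (ltn_ord x); rewrite e ltnNge dt.
Qed.

Lemma coord_ket d k t : coord (ket d k) t = if (t < d)%N && (t == k) then 1 else 0.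
Proof.
case: (ltnP t d) => H /=; last exact: coord_ge.
by rewrite (@coord_lt d (ket d k) t H) /ket /=.
Qed.

Lemma sum_delta L (c : nat -> CC) (t : nat) :
  \sum_(r < L) c r * (if t == nat_of_ord r then 1 else 0) = if (t < L)%N then c t else 0.
Proof.
case: (ltnP t L) => H.
  rewrite (bigD1 (Ordinal H)) //= eqxx mulr1 big1 ?addr0 // => r rne.
  rewrite ifN ?mulr0 //; apply: contra rne => /eqP e; apply/eqP; exact: val_inj.
rewrite big1 // => r _; rewrite ifN ?mulr0 //.
by apply/eqP => e; move: (ltn_ord r); rewrite -e ltnNge H.
Qed.

Lemma coord_eta d s t : (t < d.-1)%N -> coord (Defs.eta d s) t = w d.-1 ^+ (s * t).
Proof.
move=> H; rewrite /Defs.eta (coord_comb d d.-1 (fun r => w d.-1 ^+ (s * r)) (fun r => r)).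
under eq_bigr => r _ do rewrite coord_ket.
have td : (t < d)%N by move: H; case: d => //= d' H; apply: ltnW.
transitivity (if (t < d.-1)%N then w d.-1 ^+ (s * t) else 0); last by rewrite H.
by rewrite -(sum_delta _ (fun r => w d.-1 ^+ (s * r))); apply: eq_bigr => r _; rewrite td.
Qed.

Lemma coord_eta_l d s : coord (Defs.eta d s) d.-1 = 0.
Proof.
rewrite /Defs.eta (coord_comb d d.-1 (fun r => w d.-1 ^+ (s * r)) (fun r => r)) big1 // => r _; rewrite coord_ket.
case: (d.-1 =P r) => [e|]; last by rewrite andbF mulr0.
by move: (ltn_ord r); rewrite -e ltnn.
Qed.

Lemma coord_xi d s t : (t < d.-1)%N -> coord (xi d s) t.+1 = w d.-1 ^+ (s * t).
Proof.
move=> H; rewrite /xi (coord_comb d d.-1 (fun r => w d.-1 ^+ (s * r)) (fun r => r.+1)).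
under eq_bigr => r _ do rewrite coord_ket eqSS.
have td : (t.+1 < d)%N by move: H; case: d.
transitivity (if (t < d.-1)%N then w d.-1 ^+ (s * t) else 0); last by rewrite H.
by rewrite -(sum_delta _ (fun r => w d.-1 ^+ (s * r))); apply: eq_bigr => r _; rewrite td.
Qed.

Lemma coord_xi0 d s : coord (xi d s) 0 = 0.
Proof. by rewrite /xi (coord_comb d d.-1 (fun r => w d.-1 ^+ (s * r)) (fun r => r.+1)) big1 // => r _; rewrite coord_ket andbF mulr0. Qed.

Lemma coord_beta d s t : (t < d.-2)%N -> coord (beta d s) t.+1 = w d.-2 ^+ (s * t).
Proof.
move=> H; rewrite /beta (coord_comb d d.-2 (fun r => w d.-2 ^+ (s * r)) (fun r => r.+1)).
under eq_bigr => r _ do rewrite coord_ket eqSS.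
have td : (t.+1 < d)%N by move: H; case: d => // [[|d]] //= H; apply: ltnW.
transitivity (if (t < d.-2)%N then w d.-2 ^+ (s * t) else 0); last by rewrite H.
by rewrite -(sum_delta _ (fun r => w d.-2 ^+ (s * r))); apply: eq_bigr => r _; rewrite td.
Qed.

Lemma coord_beta0 d s : coord (beta d s) 0 = 0.
Proof. by rewrite /beta (coord_comb d d.-2 (fun r => w d.-2 ^+ (s * r)) (fun r => r.+1)) big1 // => r _; rewrite coord_ket andbF mulr0. Qed.

Lemma coord_beta_l d s : coord (beta d s) d.-1 = 0.
Proof.
rewrite /beta (coord_comb d d.-2 (fun r => w d.-2 ^+ (s * r)) (fun r => r.+1)) big1 // => r _; rewrite coord_ket.
case: (d.-1 =P r.+1) => [e|]; last by rewrite andbF mulr0.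
by have := ltn_ord r; lia.
Qed.

Lemma coord_ones d t : (t < d)%N -> coord (allones d) t = 1.
Proof.
move=> H; rewrite (@coord_ext d (allones d) (fun x : 'I_d => \sum_(r < d) (fun _ => 1) r * ket d ((fun r => r) r) x) t); last first.
  by move=> x; rewrite /allones; apply: eq_bigr => r _; rewrite mul1r.
rewrite (coord_comb d d (fun r => 1) (fun r => r)).
under eq_bigr => r _ do rewrite coord_ket H /=.
transitivity (if (t < d)%N then (1 : CC) else 0); last by rewrite H.
by rewrite -(sum_delta _ (fun r => 1)); apply: eq_bigr => r _; rewrite mul1r.
Qed.

Lemma ip_eta d s a : ipv (Defs.eta d s) a = FT d.-1 (coord a) s.
Proof. exact: (ip_comb d d.-1 (fun t => w d.-1 ^+ (s * t)) (fun t => t) a). Qed.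
Lemma ip_xi d s a : ipv (xi d s) a = FT d.-1 (fun t => coord a t.+1) s.
Proof. exact: (ip_comb d d.-1 (fun t => w d.-1 ^+ (s * t)) (fun t => t.+1) a). Qed.
Lemma ip_beta d s a : ipv (beta d s) a = FT d.-2 (fun t => coord a t.+1) s.
Proof. exact: (ip_comb d d.-2 (fun t => w d.-2 ^+ (s * t)) (fun t => t.+1) a). Qed.
Lemma ip_ket d k a : ipv (ket d k) a = coord a k.
Proof. by rewrite /ipv /coord; apply: eq_bigr => x _; rewrite conj_ket. Qed.
Lemma ip_ones d a : ipv (allones d) a = \sum_(t < d) coord a t.
Proof.
rewrite (@ipv_ext d (allones d) (fun x : 'I_d => \sum_(r < d) (fun _ => 1) r * ket d ((fun r => r) r) x) a); last first.
  by move=> x; rewrite /allones; apply: eq_bigr => r _; rewrite mul1r.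
rewrite (ip_comb d d (fun _ => 1) (fun t => t) a); apply: eq_bigr => t _.
by rewrite conjC1 mul1r.
Qed.

Lemma ipv_sym d (u v : 'I_d -> CC) : ipv u v = (ipv v u)^*.
Proof.
rewrite /ipv conj_sum; apply: eq_bigr => x _.
by rewrite conj_mul conjCK mulrC.
Qed.

Lemma FT_ext N g g' s : (forall t, (t < N)%N -> g t = g' t) -> FT N g s = FT N g' s.
Proof. by move=> H; rewrite /FT; apply: eq_bigr => t _; rewrite H. Qed.

Lemma FT_0 N g s : (forall t, (t < N)%N -> g t = 0) -> FT N g s = 0.
Proof. by move=> H; rewrite /FT big1 // => t _; rewrite H ?mulr0. Qed.

Lemma FT_w {N s s'} : (0 < N)%N -> (s < N)%N -> (s' < N)%N ->
  FT N (fun t => w N ^+ (s' * t)) s = if s == s' then N%:R else 0.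
Proof. exact: key. Qed.

Lemma FT_1 {N s} : (0 < N)%N -> (s < N)%N -> FT N (fun _ => 1) s = if s == 0%N then N%:R else 0.
Proof.
move=> N0 sN; rewrite -(FT_w N0 sN N0); apply: FT_ext => t _.
by rewrite mul0n expr0.
Qed.

Lemma inner_prod3 m n p (a a' : 'I_m -> CC) (b b' : 'I_n -> CC) (c c' : 'I_p -> CC) :
  inner (prod3 a b c) (prod3 a' b' c') = ipv a a' * ipv b b' * ipv c c'.
Proof.
rewrite /inner /ipv.
transitivity (\sum_(i : 'I_m) \sum_(j : 'I_n) \sum_(k : 'I_p)
   ((a i)^* * a' i) * ((b j)^* * b' j) * ((c k)^* * c' k)).
  rewrite pair_bigA pair_bigA /=; apply: eq_bigr => -[[i j] k] _; rewrite !ffunE /=.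
  by rewrite !conj_mul mulrACA; congr (_ * _); rewrite mulrACA.
symmetry; rewrite !mulr_suml; apply: eq_bigr => i _.
have -> : (a i)^* * a' i * (\sum_(x < n) (b x)^* * b' x) = \sum_(j < n) (a i)^* * a' i * ((b j)^* * b' j) by rewrite mulr_sumr.
rewrite mulr_suml; apply: eq_bigr => j _.
by rewrite mulr_sumr.
Qed.

Section Basic.
Variable d : nat.
Hypothesis d3 : (2 < d)%N.

Let d0 : (0 < d)%N. Proof. by apply: leq_trans d3. Qed.
Let d1 : (0 < d.-1)%N. Proof. by move: d3; case: d => [|[|[|]]]. Qed.
Let d2 : (0 < d.-2)%N. Proof. by move: d3; case: d => [|[|[|]]]. Qed.

Lemma ip_k0_xi s : ipv (ket d 0) (xi d s) = 0.
Proof. by rewrite ip_ket coord_xi0. Qed.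
Lemma ip_xi_k0 s : ipv (xi d s) (ket d 0) = 0.
Proof. by rewrite ip_xi; apply: FT_0 => t _; rewrite coord_ket andbF. Qed.
Lemma ip_kl_eta s : ipv (ket d d.-1) (Defs.eta d s) = 0.
Proof. by rewrite ip_ket coord_eta_l. Qed.
Lemma ip_eta_kl s : ipv (Defs.eta d s) (ket d d.-1) = 0.
Proof.
rewrite ip_eta; apply: FT_0 => t tl; rewrite coord_ket.
by case: eqP => [e|]; [move: tl; rewrite e ltnn | rewrite andbF].
Qed.
Lemma ip_k0_kl : ipv (ket d 0) (ket d d.-1) = 0.
Proof. rewrite ip_ket coord_ket; case: eqP => [e|]; last by rewrite andbF. by exfalso; move: d3 e; lia. Qed.
Lemma ip_kl_k0 : ipv (ket d d.-1) (ket d 0) = 0.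
Proof. rewrite ip_ket coord_ket; case: eqP => [e|]; last by rewrite andbF. by exfalso; move: d3 e; lia. Qed.
Lemma ip_k0_k0 : ipv (ket d 0) (ket d 0) = 1.
Proof. by rewrite ip_ket coord_ket d0 eqxx. Qed.
Lemma ip_kl_kl : ipv (ket d d.-1) (ket d d.-1) = 1.
Proof. by rewrite ip_ket coord_ket prednK // leqnn eqxx. Qed.
Lemma ip_k0_beta s : ipv (ket d 0) (beta d s) = 0.
Proof. by rewrite ip_ket coord_beta0. Qed.
Lemma ip_beta_k0 s : ipv (beta d s) (ket d 0) = 0.
Proof. by rewrite ip_beta; apply: FT_0 => t _; rewrite coord_ket andbF. Qed.
Lemma ip_kl_beta s : ipv (ket d d.-1) (beta d s) = 0.
Proof. by rewrite ip_ket coord_beta_l. Qed.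
Lemma ip_beta_kl s : ipv (beta d s) (ket d d.-1) = 0.
Proof.
rewrite ip_beta; apply: FT_0 => t tl; rewrite coord_ket.
by case: eqP => [e|]; [exfalso; move: tl e; lia | rewrite andbF].
Qed.

Lemma ip_xi_xi s s' : (s < d.-1)%N -> (s' < d.-1)%N ->
  ipv (xi d s) (xi d s') = if s == s' then (d.-1)%:R else 0.
Proof.
move=> sl s'l; rewrite ip_xi -(FT_w d1 sl s'l); apply: FT_ext => t tl.
exact: coord_xi.
Qed.
Lemma ip_eta_eta s s' : (s < d.-1)%N -> (s' < d.-1)%N ->
  ipv (Defs.eta d s) (Defs.eta d s') = if s == s' then (d.-1)%:R else 0.
Proof.
move=> sl s'l; rewrite ip_eta -(FT_w d1 sl s'l); apply: FT_ext => t tl.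
exact: coord_eta.
Qed.
Lemma ip_beta_beta s s' : (s < d.-2)%N -> (s' < d.-2)%N ->
  ipv (beta d s) (beta d s') = if s == s' then (d.-2)%:R else 0.
Proof.
move=> sl s'l; rewrite ip_beta -(FT_w d2 sl s'l); apply: FT_ext => t tl.
exact: coord_beta.
Qed.

Lemma ip_xi_1 s : (s < d.-1)%N -> ipv (xi d s) (allones d) = if s == 0%N then (d.-1)%:R else 0.
Proof.
move=> sl; rewrite ip_xi -(FT_1 d1 sl); apply: FT_ext => t tl.
by apply: coord_ones; move: tl; case: (d) => //.
Qed.
Lemma ip_eta_1 s : (s < d.-1)%N -> ipv (Defs.eta d s) (allones d) = if s == 0%N then (d.-1)%:R else 0.
Proof.
move=> sl; rewrite ip_eta -(FT_1 d1 sl); apply: FT_ext => t tl.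
by apply: coord_ones; move: tl; case: (d) => // n tl; apply: ltnW.
Qed.
Lemma ip_beta_1 s : (s < d.-2)%N -> ipv (beta d s) (allones d) = if s == 0%N then (d.-2)%:R else 0.
Proof.
move=> sl; rewrite ip_beta -(FT_1 d2 sl); apply: FT_ext => t tl.
by apply: coord_ones; move: tl; lia.
Qed.

Lemma conj_ifn (b : bool) k : (if b then k%:R else 0 : CC)^* = if b then k%:R else 0.
Proof. by case: b; rewrite ?conjC_nat ?conjC0. Qed.

Lemma ip_1_xi s : (s < d.-1)%N -> ipv (allones d) (xi d s) = if s == 0%N then (d.-1)%:R else 0.
Proof. by move=> sl; rewrite ipv_sym ip_xi_1 // conj_ifn. Qed.
Lemma ip_1_eta s : (s < d.-1)%N -> ipv (allones d) (Defs.eta d s) = if s == 0%N then (d.-1)%:R else 0.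
Proof. by move=> sl; rewrite ipv_sym ip_eta_1 // conj_ifn. Qed.
Lemma ip_1_beta s : (s < d.-2)%N -> ipv (allones d) (beta d s) = if s == 0%N then (d.-2)%:R else 0.
Proof. by move=> sl; rewrite ipv_sym ip_beta_1 // conj_ifn. Qed.
Lemma ip_k0_1 : ipv (ket d 0) (allones d) = 1.
Proof. by rewrite ip_ket coord_ones. Qed.
Lemma ip_kl_1 : ipv (ket d d.-1) (allones d) = 1.
Proof. by rewrite ip_ket coord_ones // prednK. Qed.
Lemma ip_1_k0 : ipv (allones d) (ket d 0) = 1.
Proof. by rewrite ipv_sym ip_k0_1 conjC1. Qed.
Lemma ip_1_kl : ipv (allones d) (ket d d.-1) = 1.
Proof. by rewrite ipv_sym ip_kl_1 conjC1. Qed.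
Lemma ip_1_1 : ipv (allones d) (allones d) = d%:R.
Proof.
rewrite ip_ones (eq_bigr (fun _ => 1)) ?sumr_const ?card_ord // => t _.
exact: coord_ones.
Qed.
End Basic.

Definition lab := (nat * nat * nat * nat)%type.

Definition elt m n p (l : lab) : tri m n p :=
  let: (f, i, j, k) := l in
  match f with
  | 0 => prod3 (xi m i) (ket n 0) (Defs.eta p k)
  | 1 => prod3 (xi m i) (Defs.eta n j) (ket p p.-1)
  | 2 => prod3 (ket m m.-1) (xi n j) (Defs.eta p k)
  | 3 => prod3 (Defs.eta m i) (ket n n.-1) (xi p k)
  | 4 => prod3 (Defs.eta m i) (xi n j) (ket p 0)
  | 5 => prod3 (ket m 0) (Defs.eta n j) (xi p k)
  | 6 => prod3 (beta m i) (beta n j) (beta p k)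
  | _ => stopper m n p
  end.

Definition valid m n p (l : lab) : bool :=
  let: (f, i, j, k) := l in
  match f with
  | 0 => [&& i < m.-1, j == 0 & k < p.-1]
  | 1 => [&& i < m.-1, j < n.-1 & k == 0]
  | 2 => [&& i == 0, j < n.-1 & k < p.-1]
  | 3 => [&& i < m.-1, j == 0 & k < p.-1]
  | 4 => [&& i < m.-1, j < n.-1 & k == 0]
  | 5 => [&& i == 0, j < n.-1 & k < p.-1]
  | 6 => [&& i < m.-2, j < n.-2 & k < p.-2]
  | 7 => [&& i == 0, j == 0 & k == 0]
  | _ => false
  end%N.

Definition nontriv (l : lab) : bool :=
  let: (f, i, j, k) := l in [|| f == 7, i != 0, j != 0 | k != 0]%N.

Ltac ipsimp :=
  rewrite ?ip_k0_xi ?ip_xi_k0 ?ip_kl_eta ?ip_eta_kl ?ip_k0_kl ?ip_kl_k0 ?ip_k0_k0 ?ip_kl_kl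
          ?ip_k0_beta ?ip_beta_k0 ?ip_kl_beta ?ip_beta_kl ?ip_xi_xi ?ip_eta_eta ?ip_beta_beta
          ?ip_xi_1 ?ip_eta_1 ?ip_beta_1 ?ip_1_xi ?ip_1_eta ?ip_1_beta ?ip_k0_1 ?ip_kl_1
          ?ip_1_k0 ?ip_1_kl ?ip_1_1 ?mulr0 ?mul0r //.

Lemma orth m n p (l l' : lab) : (2 < m)%N -> (2 < n)%N -> (2 < p)%N ->
  valid m n p l -> valid m n p l' -> l != l' ->
  (l.1.1.1 == 7%N -> nontriv l') -> (l'.1.1.1 == 7%N -> nontriv l) ->
  inner (elt m n p l) (elt m n p l') = 0.
Proof.
move=> Hm Hn Hp.
case: l => [[[f i] j] k]; case: l' => [[[f' i'] j'] k'].
case: f => [|[|[|[|[|[|[|[|f]]]]]]]]; case: f' => [|[|[|[|[|[|[|[|f']]]]]]]] //=;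
 move=> /and3P[h1 h2 h3] /and3P[h1' h2' h3'] hne hn1 hn2;
 rewrite /stopper inner_prod3; ipsimp.
all: repeat match goal with H : is_true (_ == _) |- _ => move/eqP in H; subst end.
all: move: hne hn1 hn2; repeat (case: eqP => [?|?]; subst => //=); rewrite ?mulr0 ?mul0r //.
all: by move=> _ a b; first [ have := a isT | have := b isT ].
Qed.

Lemma natr_neq0 {k} : (0 < k)%N -> (k%:R : CC) != 0.
Proof. by move=> k0; rewrite pnatr_eq0 -lt0n. Qed.

Lemma FT_inv N g t' : (0 < N)%N -> (t' < N)%N ->
  \sum_(s < N) w N ^+ (s * t') * FT N g s = N%:R * g t'.
Proof.
move=> N0 tN; rewrite /FT.
under eq_bigr => s _ do rewrite mulr_sumr.
rewrite exchange_big /=.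
transitivity (\sum_(t < N) (if nat_of_ord t == t' then N%:R else 0) * g t).
  apply: eq_bigr => t _; rewrite -(key N0 (ltn_ord t) tN) mulr_suml.
  by apply: eq_bigr => s _; rewrite mulrCA mulrA [(s * t)%N]mulnC [(s * t')%N]mulnC.
rewrite (bigD1 (Ordinal tN)) //= eqxx big1 ?addr0 // => t tne.
rewrite ifN ?mul0r //; apply: contra tne => /eqP e; apply/eqP; exact: val_inj.
Qed.

Lemma FT_zero N g : (0 < N)%N -> (forall s, (s < N)%N -> FT N g s = 0) ->
  forall t, (t < N)%N -> g t = 0.
Proof.
move=> N0 H t tN; apply/eqP.
have := FT_inv N g t N0 tN; rewrite big1 => [/esym/eqP|s _]; last by rewrite H ?mulr0.
by rewrite mulf_eq0 (negbTE (natr_neq0 N0)).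
Qed.

Lemma FT_const N g : (0 < N)%N -> (forall s, (0 < s)%N -> (s < N)%N -> FT N g s = 0) ->
  forall t, (t < N)%N -> g t = g 0%N.
Proof.
move=> N0 H.
have E : forall t, (t < N)%N -> N%:R * g t = FT N g 0.
  move=> t tN; rewrite -(FT_inv N g t N0 tN).
  rewrite (bigD1 (Ordinal N0)) //= mul0n expr0 mul1r big1 ?addr0 // => s s0.
  rewrite H ?mulr0 //; rewrite lt0n; apply: contra s0 => /eqP e; apply/eqP; exact: val_inj.
move=> t tN; apply: (mulfI (natr_neq0 N0)); by rewrite E // E.
Qed.

Lemma FT_pair N M g h : (0 < N)%N -> (0 < M)%N ->
  (forall i k, (i < N)%N -> (k < M)%N -> (i != 0%N) || (k != 0%N) -> FT N g i * FT M h k = 0) ->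
  (forall t, (t < N)%N -> g t = 0) \/ (forall t, (t < M)%N -> h t = 0) \/
  ((forall t, (t < N)%N -> g t = g 0%N) /\ (forall t, (t < M)%N -> h t = h 0%N)).
Proof.
move=> N0 M0 H.
case: (boolP [forall i : 'I_N, FT N g i == 0]) => [/forallP Hg | /forallPn [i0 Hi0]].
  by left; apply: FT_zero => // s sN; apply/eqP: (Hg (Ordinal sN)).
case: (boolP [forall k : 'I_M, FT M h k == 0]) => [/forallP Hh | /forallPn [k0 Hk0]].
  by right; left; apply: FT_zero => // s sN; apply/eqP: (Hh (Ordinal sN)).
right; right; split.
  apply: FT_const => // s s0 sN; apply/eqP.
  have := H s k0 sN (ltn_ord k0); rewrite -lt0n s0 => /(_ isT)/eqP.
  by rewrite mulf_eq0 (negbTE Hk0) orbF.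
apply: FT_const => // s s0 sN; apply/eqP.
have := H i0 s (ltn_ord i0) sN; rewrite -(lt0n s) s0 orbT => /(_ isT)/eqP.
by rewrite mulf_eq0 (negbTE Hi0).
Qed.

Lemma FT_triple N M L g h l : (0 < N)%N -> (0 < M)%N -> (0 < L)%N ->
  (forall i j k, (i < N)%N -> (j < M)%N -> (k < L)%N -> [|| i != 0%N, j != 0%N | k != 0%N] ->
     FT N g i * FT M h j * FT L l k = 0) ->
  [\/ (forall t, (t < N)%N -> g t = 0), (forall t, (t < M)%N -> h t = 0),
      (forall t, (t < L)%N -> l t = 0) |
  [/\ (forall t, (t < N)%N -> g t = g 0%N), (forall t, (t < M)%N -> h t = h 0%N) &
      (forall t, (t < L)%N -> l t = l 0%N)]].
Proof.
move=> N0 M0 L0 H.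
case: (boolP [forall i : 'I_N, FT N g i == 0]) => [/forallP Hg | /forallPn [i0 Hi0]].
  by apply: Or41; apply: FT_zero => // s sN; apply/eqP: (Hg (Ordinal sN)).
case: (boolP [forall k : 'I_M, FT M h k == 0]) => [/forallP Hh | /forallPn [j0 Hj0]].
  by apply: Or42; apply: FT_zero => // s sN; apply/eqP: (Hh (Ordinal sN)).
case: (boolP [forall k : 'I_L, FT L l k == 0]) => [/forallP Hl | /forallPn [k0 Hk0]].
  by apply: Or43; apply: FT_zero => // s sN; apply/eqP: (Hl (Ordinal sN)).
apply: Or44; split.
- apply: FT_const => // s s0 sN; apply/eqP.
  have := H s j0 k0 sN (ltn_ord j0) (ltn_ord k0); rewrite -lt0n s0 => /(_ isT)/eqP.
  by rewrite !mulf_eq0 (negbTE Hj0) (negbTE Hk0) !orbF.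
- apply: FT_const => // s s0 sN; apply/eqP.
  have := H i0 s k0 (ltn_ord i0) sN (ltn_ord k0); rewrite -(lt0n s) s0 orbT => /(_ isT)/eqP.
  by rewrite !mulf_eq0 (negbTE Hi0) (negbTE Hk0) !orbF.
- apply: FT_const => // s s0 sN; apply/eqP.
  have := H i0 j0 s (ltn_ord i0) (ltn_ord j0) sN; rewrite -(lt0n s) s0 !orbT => /(_ isT)/eqP.
  by rewrite !mulf_eq0 (negbTE Hi0) (negbTE Hj0) !orbF.
Qed.
Definition b_V := (bool * bool * bool * bool * bool * bool)%type.
Definition b_x0z (v : b_V) := let: (a,_,_,_,_,_) := v in a.
Definition b_xlz (v : b_V) := let: (_,a,_,_,_,_) := v in a.
Definition b_kz (v : b_V) := let: (_,_,a,_,_,_) := v in a.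
Definition b_x0k (v : b_V) := let: (_,_,_,a,_,_) := v in a.
Definition b_xlk (v : b_V) := let: (_,_,_,_,a,_) := v in a.
Definition b_mk (v : b_V) := let: (_,_,_,_,_,a) := v in a.
Definition b_mz v := b_mk v && b_kz v.
Definition b_zR v := b_mz v && b_xlz v.
Definition b_kR v := b_mk v && b_xlk v.
Definition b_zL v := b_x0z v && b_mz v.
Definition b_kL v := b_mk v && b_x0k v.
Definition b_nzv v := ~~ (b_x0z v && b_mz v && b_xlz v).
Definition b_consv v :=
  [&& (b_x0z v && b_kz v ==> b_x0k v), (b_x0z v && b_x0k v ==> b_kz v), (b_kz v && b_x0k v ==> b_x0z v),
      (b_xlz v && b_kz v ==> b_xlk v), (b_xlz v && b_xlk v ==> b_kz v) & (b_kz v && b_xlk v ==> b_xlz v)].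
Definition b_snz v := b_mk v && b_nzv v &&
  (((b_x0z v || b_x0k v) && (b_xlz v || b_xlk v)) || (b_kz v && (b_x0z v || b_xlz v))).
Definition b_pairc zP kP zQ kQ := [|| zP, zQ | kP && kQ].

Definition b_chk (a b c : b_V) : bool :=
  [&& b_consv a, b_consv b, b_consv c, b_nzv a, b_nzv b, b_nzv c,
      b_x0z b || b_pairc (b_zR a) (b_kR a) (b_zL c) (b_kL c),
      b_xlz c || b_pairc (b_zR a) (b_kR a) (b_zL b) (b_kL b),
      b_xlz a || b_pairc (b_zR b) (b_kR b) (b_zL c) (b_kL c),
      b_xlz b || b_pairc (b_zL a) (b_kL a) (b_zR c) (b_kR c),
      b_x0z c || b_pairc (b_zL a) (b_kL a) (b_zR b) (b_kR b),
      b_x0z a || b_pairc (b_zL b) (b_kL b) (b_zR c) (b_kR c),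
      [|| b_mz a, b_mz b, b_mz c | b_mk a && b_mk b && b_mk c] &
      ~~ (b_snz a && b_snz b && b_snz c)] ==> false.

Definition b_allb (f : bool -> bool) := f true && f false.
Definition b_allV (f : b_V -> bool) :=
  b_allb (fun x1 => b_allb (fun x2 => b_allb (fun x3 => b_allb (fun x4 => b_allb (fun x5 => b_allb (fun x6 =>
    f (x1,x2,x3,x4,x5,x6))))))).
Lemma b_allbP f : b_allb f -> forall b, f b.
Proof. by case/andP => ? ? []. Qed.
Lemma b_allVP (f : b_V -> bool) : b_allV f -> forall v, f v.
Proof.
move=> H [[[[[x1 x2] x3] x4] x5] x6]; move: H.
by move=> /b_allbP/(_ x1)/b_allbP/(_ x2)/b_allbP/(_ x3)/b_allbP/(_ x4)/b_allbP/(_ x5)/b_allbP/(_ x6).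
Qed.
Lemma b_chk_all_b : b_allV (fun a => b_allV (fun b => b_allV (fun c => b_chk a b c))).
Proof. by vm_compute. Qed.
Lemma b_chk_all a b c : b_chk a b c.
Proof. by have := b_allVP _ b_chk_all_b a => /b_allVP/(_ b)/b_allVP/(_ c). Qed.

Definition atoms d (A : nat -> CC) : b_V :=
  (A 0%N == 0, A d.-1 == 0, A 1%N == 0, A 0%N == A 1%N, A d.-1 == A 1%N,
   [forall t : 'I_d.-2, A t.+1 == A 1%N]).

Section Atoms.
Variable d : nat.
Hypothesis d3 : (2 < d)%N.
Variable A : nat -> CC.
Let dl : d.-1 = d.-2.+1. Proof. by move: d3; case: d => [|[|[|]]]. Qed.

Lemma at_cons : b_consv (atoms d A).
Proof.
rewrite /b_consv /=.
by repeat (apply/andP; split); apply/implyP => /andP[/eqP e1 /eqP e2]; apply/eqP;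
  first [by rewrite e1 e2 | by rewrite -e2 e1 | by rewrite e2 e1 | by rewrite -e1 e2 | by rewrite -e2 -e1].
Qed.

Lemma at_ZR : (forall t, (t < d.-1)%N -> A t.+1 = 0) -> b_zR (atoms d A).
Proof.
move=> H; rewrite /b_zR /b_mz /=.
have A1 : A 1%N = 0 by apply: H; rewrite dl.
rewrite A1 eqxx andbT; apply/andP; split.
  by apply/forallP => t; rewrite H //; have := ltn_ord t; lia.
by rewrite dl H // dl.
Qed.

Lemma at_KR : (forall t, (t < d.-1)%N -> A t.+1 = A 1%N) -> b_kR (atoms d A).
Proof.
move=> H; rewrite /b_kR /=; apply/andP; split.
  by apply/forallP => t; rewrite H //; have := ltn_ord t; lia.
by rewrite dl H // dl.
Qed.

Lemma at_ZL : (forall t, (t < d.-1)%N -> A t = 0) -> b_zL (atoms d A).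
Proof.
move=> H; rewrite /b_zL /b_mz /=.
have A1 : A 1%N = 0 by apply: H; move: d3; lia.
rewrite A1 H ?eqxx ?andbT; last by move: d3; lia.
by apply/forallP => t; rewrite H //; have := ltn_ord t; lia.
Qed.

Lemma at_KL : (forall t, (t < d.-1)%N -> A t = A 0%N) -> b_kL (atoms d A).
Proof.
move=> H; rewrite /b_kL /=.
have A1 : A 1%N = A 0%N by apply: H; move: d3; lia.
rewrite A1 eqxx andbT.
by apply/forallP => t; rewrite H //; have := ltn_ord t; lia.
Qed.

Lemma at_ZM : (forall t, (t < d.-2)%N -> A t.+1 = 0) -> b_mz (atoms d A).
Proof.
move=> H; rewrite /b_mz /=.
have A1 : A 1%N = 0 by apply: H; move: d3; case: d => [|[|[|]]].
rewrite A1 eqxx andbT.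
by apply/forallP => t; rewrite H.
Qed.

Lemma at_KM : (forall t, (t < d.-2)%N -> A t.+1 = A 1%N) -> b_mk (atoms d A).
Proof. by move=> H; rewrite /b_mk /=; apply/forallP => t; rewrite H. Qed.

Lemma at_mk : b_mk (atoms d A) -> forall t, (t < d.-2)%N -> A t.+1 = A 1%N.
Proof. by move=> /forallP H t tl; apply/eqP: (H (Ordinal tl)). Qed.

Lemma at_nz : (exists2 t, (t < d)%N & A t != 0) -> b_nzv (atoms d A).
Proof.
move=> [t td At]; rewrite /b_nzv /b_mz /=; apply/negP => /andP[/andP[/eqP A0 /andP[mk /eqP A1]] /eqP Al].
move: At; case: t td => [|t] td; first by rewrite A0 eqxx.
case: (ltnP t d.-2) => tl.
  by rewrite (at_mk mk) // A1 eqxx.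
have -> : t.+1 = d.-1 by move: td tl; lia.
by rewrite Al eqxx.
Qed.

Lemma sum_split : \sum_(t < d) A t = A 0%N + \sum_(t < d.-2) A t.+1 + A d.-1.
Proof.
have dd : d = d.-2.+2 by move: d3; case: d => [|[|[|]]].
rewrite dd big_ord_recl big_ord_recr /= addrA.
by [].
Qed.

Lemma at_snz : b_snz (atoms d A) -> \sum_(t < d) A t != 0.
Proof.
rewrite /b_snz /b_nzv /b_mz /= => /andP[/andP[mk nz] H].
rewrite sum_split.
have -> : \sum_(t < d.-2) A t.+1 = (d.-2)%:R * A 1%N.
  rewrite (eq_bigr (fun _ => A 1%N)) ?sumr_const ?card_ord ?mulr_natl // => t _.
  exact: at_mk.
have n0 : (d.-2)%:R != 0 :> CC by apply: natr_neq0; move: d3; case: d => [|[|[|]]].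
move: nz H; rewrite mk /=.
case: (A 1%N =P 0) => [k0|/eqP k0] /=.
  rewrite k0 mulr0 addr0 !orbb andbT.
  by case: (A 0%N =P 0) => [a|/eqP a]; case: (A d.-1 =P 0) => [b|/eqP b];
    rewrite ?a ?b ?add0r ?addr0 ?eqxx ?(negbTE a) ?(negbTE b) //=.
rewrite !andbF orbF => _ /andP[H1 H2].
have [e0 E0] : exists e0 : nat, A 0%N = e0%:R * A 1%N.
  by case/orP: H1 => /eqP ->; [exists 0%N; rewrite mul0r | exists 1%N; rewrite mul1r].
have [el El] : exists el : nat, A d.-1 = el%:R * A 1%N.
  by case/orP: H2 => /eqP ->; [exists 0%N; rewrite mul0r | exists 1%N; rewrite mul1r].
rewrite E0 El -!mulrDl -!natrD mulf_neq0 //.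
apply: natr_neq0; move: d3; case: d => [|[|[|]]] //= n; lia.
Qed.
End Atoms.

Section Pairs.
Variables (S T : eqType).
Lemma allpairs_mem (s : seq S) (t : seq T) x y :
  ((x, y) \in [seq (a, b) | a <- s, b <- t]) = (x \in s) && (y \in t).
Proof.
apply/allpairsP/andP => [[[a b] [/= ha hb [-> ->]]] // | [hx hy]].
by exists (x, y).
Qed.
Lemma allpairs_uniq2 (s : seq S) (t : seq T) : uniq s -> uniq t -> uniq [seq (a, b) | a <- s, b <- t].
Proof. by move=> us ut; apply: allpairs_uniq => // -[a b] [a' b'] _ _. Qed.
End Pairs.

Lemma mem_pairs0 a b i k : ((i, k) \in pairs0 a b) = [&& (i < a)%N, (k < b)%N & (i != 0%N) || (k != 0%N)].
Proof.
rewrite mem_filter allpairs_mem !mem_iota /= !add0n xpair_eqE negb_and.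
by case: (i < a)%N; case: (k < b)%N; case: (i == 0%N); case: (k == 0%N).
Qed.

Lemma uniq_pairs0 a b : uniq (pairs0 a b).
Proof. by apply: filter_uniq; apply: allpairs_uniq2; apply: iota_uniq. Qed.

Lemma size_pairs0 a b : (0 < a)%N -> (0 < b)%N -> size (pairs0 a b) = (a * b).-1.
Proof.
move=> a0 b0; rewrite /pairs0 size_filter.
set s := [seq (i, k) | i <- iota 0 a, k <- iota 0 b].
have := count_predC (pred1 (0, 0)%N) s.
rewrite count_uniq_mem ?allpairs_uniq2 ?iota_uniq // allpairs_mem !mem_iota /= a0 b0.
rewrite size_allpairs !size_iota => <-; rewrite add1n /=.
by apply: eq_count => q.
Qed.

Lemma mem_triples0 a b c i j k :
  (((i, j), k) \in triples0 a b c) = [&& (i < a)%N, (j < b)%N, (k < c)%N & [|| i != 0%N, j != 0%N | k != 0%N]].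
Proof.
rewrite mem_filter allpairs_mem allpairs_mem !mem_iota /= !add0n !xpair_eqE !negb_and.
by case: (i < a)%N; case: (j < b)%N; case: (k < c)%N; case: (i == 0%N); case: (j == 0%N); case: (k == 0%N).
Qed.

Lemma uniq_triples0 a b c : uniq (triples0 a b c).
Proof. by apply: filter_uniq; apply: allpairs_uniq2; rewrite ?allpairs_uniq2 ?iota_uniq. Qed.

Lemma size_triples0 a b c : (0 < a)%N -> (0 < b)%N -> (0 < c)%N -> size (triples0 a b c) = (a * b * c).-1.
Proof.
move=> a0 b0 c0; rewrite /triples0 size_filter.
set s := [seq (ij, k) | ij <- _, k <- iota 0 c].
have := count_predC (pred1 ((0, 0), 0)%N) s.
rewrite count_uniq_mem ?allpairs_uniq2 ?iota_uniq // allpairs_mem allpairs_mem !mem_iota /= a0 b0 c0.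
rewrite !size_allpairs !size_iota => <-; rewrite add1n /=.
by apply: eq_count => q.
Qed.

Definition P0 m p : seq lab := [seq (0, q.1, 0, q.2)%N | q <- pairs0 m.-1 p.-1].
Definition P1 m n : seq lab := [seq (1, q.1, q.2, 0)%N | q <- pairs0 m.-1 n.-1].
Definition P2 n p : seq lab := [seq (2, 0, q.1, q.2)%N | q <- pairs0 n.-1 p.-1].
Definition P3 m p : seq lab := [seq (3, q.1, 0, q.2)%N | q <- pairs0 m.-1 p.-1].
Definition P4 m n : seq lab := [seq (4, q.1, q.2, 0)%N | q <- pairs0 m.-1 n.-1].
Definition P5 n p : seq lab := [seq (5, 0, q.1, q.2)%N | q <- pairs0 n.-1 p.-1].
Definition P6 m n p : seq lab := [seq (6, q.1.1, q.1.2, q.2)%N | q <- triples0 m.-2 n.-2 p.-2].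
Definition labs m n p : seq lab :=
  P0 m p ++ P1 m n ++ P2 n p ++ P3 m p ++ P4 m n ++ P5 n p ++ P6 m n p ++ [:: (7, 0, 0, 0)%N].

Lemma UU_map m n p : UU m n p = map (elt m n p) (labs m n p).
Proof. by rewrite /UU /labs !map_cat -!map_comp. Qed.

Lemma labs_valid m n p l : l \in labs m n p -> valid m n p l && nontriv l.
Proof.
rewrite !mem_cat !inE.
case/orP => [/mapP[[i k]]|/orP[/mapP[[i k]]|/orP[/mapP[[i k]]|/orP[/mapP[[i k]]|/orP[/mapP[[i k]]|
   /orP[/mapP[[i k]]|/orP[/mapP[[[i j] k]]|/eqP ->]]]]]]] //;
  rewrite ?mem_pairs0 ?mem_triples0 => H -> /=; move: H;
  by case: (_ < _)%N; case: (_ < _)%N; try case: (_ < _)%N; case: (i == 0%N); try case: (j == 0%N); try case: (k == 0%N).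
Qed.

Lemma labs_in m n p l : valid m n p l -> nontriv l -> l \in labs m n p.
Proof.
case: l => [[[f i] j] k].
case: f => [|[|[|[|[|[|[|[|f]]]]]]]] //= /and3P[h1 h2 h3] hn; rewrite !mem_cat ?inE;
repeat match goal with H : is_true (_ == _) |- _ => move/eqP in H; subst end.
- apply/orP; left; apply/mapP; exists (i, k) => //; rewrite mem_pairs0 h1 h3 /=; by move: hn; case: (i == 0%N); case: (k == 0%N).
- do 1 (apply/orP; right); apply/orP; left; apply/mapP; exists (i, j) => //; rewrite mem_pairs0 h1 h2 /=; by move: hn; case: (i == 0%N); try case: (j == 0%N); try case: (k == 0%N).
- do 2 (apply/orP; right); apply/orP; left; apply/mapP; exists (j, k) => //; rewrite mem_pairs0 h2 h3 /=; by move: hn; case: (j == 0%N); case: (k == 0%N).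
- do 3 (apply/orP; right); apply/orP; left; apply/mapP; exists (i, k) => //; rewrite mem_pairs0 h1 h3 /=; by move: hn; case: (i == 0%N); try case: (j == 0%N); try case: (k == 0%N).
- do 4 (apply/orP; right); apply/orP; left; apply/mapP; exists (i, j) => //; rewrite mem_pairs0 h1 h2 /=; by move: hn; case: (i == 0%N); try case: (j == 0%N); try case: (k == 0%N).
- do 5 (apply/orP; right); apply/orP; left; apply/mapP; exists (j, k) => //; rewrite mem_pairs0 h2 h3 /=; by move: hn; case: (j == 0%N); case: (k == 0%N).
- do 6 (apply/orP; right); apply/orP; left; apply/mapP; exists ((i, j), k) => //; rewrite mem_triples0 h1 h2 h3 /=; exact: hn.
- by rewrite eqxx !orbT.
Qed.

Lemma uniq_cat_tag (f : nat) (s1 s2 : seq lab) : uniq s1 -> uniq s2 ->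
  all (fun x : lab => x.1.1.1 == f) s1 -> all (fun x : lab => f < x.1.1.1)%N s2 -> uniq (s1 ++ s2).
Proof.
move=> u1 u2 a1 a2; rewrite cat_uniq u1 u2 /= andbT; apply/hasPn => x xs2; apply/negP => xs1.
have := allP a1 x xs1; have := allP a2 x xs2 => lt /eqP e; by rewrite e ltnn in lt.
Qed.

Ltac tagall := rewrite ?all_cat; repeat (apply/andP; split); try (apply/allP => x /mapP[q _ ->]); done.

Ltac umap := rewrite map_inj_uniq ?uniq_pairs0 ?uniq_triples0 //;
  first [by move=> [a b] [c d] [-> ->] | by move=> [[a b] c] [[a' b'] c'] [-> -> ->]].

Lemma uniq_labs m n p : uniq (labs m n p).
Proof.
rewrite /labs.
apply: (uniq_cat_tag 0); [umap| |tagall|tagall].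
apply: (uniq_cat_tag 1); [umap| |tagall|tagall].
apply: (uniq_cat_tag 2); [umap| |tagall|tagall].
apply: (uniq_cat_tag 3); [umap| |tagall|tagall].
apply: (uniq_cat_tag 4); [umap| |tagall|tagall].
apply: (uniq_cat_tag 5); [umap| |tagall|tagall].
apply: (uniq_cat_tag 6); [umap| |tagall|tagall].
done.
Qed.

Lemma size_labs m n p : (2 < m)%N -> (2 < n)%N -> (2 < p)%N -> size (labs m n p) = (m * n * p - 8)%N.
Proof.
move=> Hm Hn Hp; rewrite /labs !size_cat !size_map /= !size_pairs0 ?size_triples0;
  try (by move: Hm; case: m => [|[|[|]]]); try (by move: Hn; case: n => [|[|[|]]]);
  try (by move: Hp; case: p => [|[|[|]]]).
have [x ->] : exists x, m = (x + 3)%N by exists (m - 3)%N; lia.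
have [y ->] : exists y, n = (y + 3)%N by exists (n - 3)%N; lia.
have [z ->] : exists z, p = (z + 3)%N by exists (p - 3)%N; lia.
rewrite !addn3 /=.
nia.
Qed.

Lemma selfip m n p l : (2 < m)%N -> (2 < n)%N -> (2 < p)%N -> valid m n p l ->
  inner (elt m n p l) (elt m n p l) != 0.
Proof.
move=> Hm Hn Hp; case: l => [[[f i] j] k].
case: f => [|[|[|[|[|[|[|[|f]]]]]]]] //= /and3P[h1 h2 h3];
 rewrite /stopper inner_prod3; ipsimp; rewrite ?eqxx;
 repeat apply: mulf_neq0; rewrite ?oner_neq0 //; apply: natr_neq0; lia.
Qed.

Lemma elt_prod m n p l : exists a b c, elt m n p l = prod3 a b c.
Proof.
case: l => [[[f i] j] k].
by case: f => [|[|[|[|[|[|[|[|f]]]]]]]]; do 3 eexists; reflexivity.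
Qed.

Lemma inner0 m n p (u : tri m n p) : inner u 0 = 0.
Proof. by rewrite /inner big1 // => x _; rewrite ffunE mulr0. Qed.

Lemma inner_subr m n p (u x y : tri m n p) : inner u (x - y) = inner u x - inner u y.
Proof.
rewrite /inner -sumrB; apply: eq_bigr => z _; by rewrite !ffunE mulrBr.
Qed.

Lemma inner_sym m n p (u v : tri m n p) : inner u v = (inner v u)^*.
Proof.
rewrite /inner conj_sum; apply: eq_bigr => x _.
by rewrite conj_mul conjCK mulrC.
Qed.

Lemma inner_subl m n p (u x y : tri m n p) : inner (x - y) u = inner x u - inner y u.
Proof. by rewrite inner_sym inner_subr rmorphB /= -!inner_sym. Qed.

Lemma pair_step (x : CC) N M g h (zg kg zh kh : bool) : (0 < N)%N -> (0 < M)%N ->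
  ((forall t, (t < N)%N -> g t = 0) -> zg) -> ((forall t, (t < N)%N -> g t = g 0%N) -> kg) ->
  ((forall t, (t < M)%N -> h t = 0) -> zh) -> ((forall t, (t < M)%N -> h t = h 0%N) -> kh) ->
  (forall i k, (i < N)%N -> (k < M)%N -> (i != 0%N) || (k != 0%N) -> x * (FT N g i * FT M h k) = 0) ->
  (x == 0) || b_pairc zg kg zh kh.
Proof.
move=> N0 M0 Zg Kg Zh Kh H; case: (x =P 0) => //= /eqP x0.
have [Z1|[Z2|[K1 K2]]] := FT_pair N M g h N0 M0 (fun i k hi hk hik =>
  etrans (esym (mulKf x0 _)) (etrans (congr1 _ (H i k hi hk hik)) (mulr0 _))).
- by rewrite /b_pairc Zg.
- by rewrite /b_pairc Zh ?orbT.
- by rewrite /b_pairc Kg ?Kh ?orbT.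
Qed.

Ltac splitall := first [apply/andP; split; [| splitall] | idtac].

Lemma nz_coord d (a : 'I_d -> CC) : [exists x, a x != 0] -> exists2 t, (t < d)%N & coord a t != 0.
Proof.
case/existsP => x ax; exists (nat_of_ord x) => //; rewrite (@coord_lt d a x (ltn_ord x)).
by have -> : Ordinal (ltn_ord x) = x by apply: val_inj.
Qed.

Lemma unext m n p (a : 'I_m -> CC) (b : 'I_n -> CC) (c : 'I_p -> CC) :
  (2 < m)%N -> (2 < n)%N -> (2 < p)%N ->
  [exists x, a x != 0] -> [exists x, b x != 0] -> [exists x, c x != 0] ->
  (forall l, valid m n p l -> nontriv l -> inner (elt m n p l) (prod3 a b c) = 0) -> False.
Proof.
move=> Hm Hn Hp na nb nc Hl.
set A := coord a; set B := coord b; set C := coord c.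
have m1 : (0 < m.-1)%N by lia.
have n1 : (0 < n.-1)%N by lia.
have p1 : (0 < p.-1)%N by lia.
have m2 : (0 < m.-2)%N by lia.
have n2 : (0 < n.-2)%N by lia.
have p2 : (0 < p.-2)%N by lia.
have := b_chk_all (atoms m A) (atoms n B) (atoms p C).
rewrite /b_chk => /implyP H; suff : false by []; apply: H.
splitall.
- exact: at_cons.
- exact: at_cons.
- exact: at_cons.
- by apply: at_nz => //; apply: nz_coord.
- by apply: at_nz => //; apply: nz_coord.
- by apply: at_nz => //; apply: nz_coord.
-
  apply: (pair_step (B 0%N) (m.-1) (p.-1) (fun t => A t.+1) C) => //.
  + exact: at_ZR.
  + exact: at_KR.
  + exact: at_ZL.
  + exact: at_KL.
  move=> i k hi hk hik.
  have E : inner (elt m n p (0, i, 0, k)%N) (prod3 a b c) = 0.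
    apply: Hl; first by rewrite /= hi hk.
    by move: hik; rewrite /=; case: (i == 0%N); case: (k == 0%N).
  by move: E; rewrite /= inner_prod3 ip_xi ip_ket ip_eta => E; rewrite mulrCA mulrA E.
-
  apply: (pair_step (C p.-1) (m.-1) (n.-1) (fun t => A t.+1) B) => //.
  + exact: at_ZR.
  + exact: at_KR.
  + exact: at_ZL.
  + exact: at_KL.
  move=> i k hi hk hik.
  have E : inner (elt m n p (1, i, k, 0)%N) (prod3 a b c) = 0.
    apply: Hl; first by rewrite /= hi hk.
    by move: hik; rewrite /=; case: (i == 0%N); case: (k == 0%N).
  by move: E; rewrite /= inner_prod3 ip_xi ip_ket ip_eta => E; rewrite mulrC E.
-
  apply: (pair_step (A m.-1) (n.-1) (p.-1) (fun t => B t.+1) C) => //.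
  + exact: at_ZR.
  + exact: at_KR.
  + exact: at_ZL.
  + exact: at_KL.
  move=> i k hi hk hik.
  have E : inner (elt m n p (2, 0, i, k)%N) (prod3 a b c) = 0.
    apply: Hl; first by rewrite /= hi hk.
    by move: hik; rewrite /=; case: (i == 0%N); case: (k == 0%N).
  by move: E; rewrite /= inner_prod3 ip_xi ip_ket ip_eta => E; rewrite mulrA E.
-
  apply: (pair_step (B n.-1) (m.-1) (p.-1) A (fun t => C t.+1)) => //.
  + exact: at_ZL.
  + exact: at_KL.
  + exact: at_ZR.
  + exact: at_KR.
  move=> i k hi hk hik.
  have E : inner (elt m n p (3, i, 0, k)%N) (prod3 a b c) = 0.
    apply: Hl; first by rewrite /= hi hk.
    by move: hik; rewrite /=; case: (i == 0%N); case: (k == 0%N).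
  by move: E; rewrite /= inner_prod3 ip_xi ip_ket ip_eta => E; rewrite mulrCA mulrA E.
-
  apply: (pair_step (C 0%N) (m.-1) (n.-1) A (fun t => B t.+1)) => //.
  + exact: at_ZL.
  + exact: at_KL.
  + exact: at_ZR.
  + exact: at_KR.
  move=> i k hi hk hik.
  have E : inner (elt m n p (4, i, k, 0)%N) (prod3 a b c) = 0.
    apply: Hl; first by rewrite /= hi hk.
    by move: hik; rewrite /=; case: (i == 0%N); case: (k == 0%N).
  by move: E; rewrite /= inner_prod3 ip_xi ip_ket ip_eta => E; rewrite mulrC E.
-
  apply: (pair_step (A 0%N) (n.-1) (p.-1) B (fun t => C t.+1)) => //.
  + exact: at_ZL.
  + exact: at_KL.
  + exact: at_ZR.
  + exact: at_KR.
  move=> i k hi hk hik.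
  have E : inner (elt m n p (5, 0, i, k)%N) (prod3 a b c) = 0.
    apply: Hl; first by rewrite /= hi hk.
    by move: hik; rewrite /=; case: (i == 0%N); case: (k == 0%N).
  by move: E; rewrite /= inner_prod3 ip_xi ip_ket ip_eta => E; rewrite mulrA E.
-
  have HF : forall i j k, (i < m.-2)%N -> (j < n.-2)%N -> (k < p.-2)%N ->
      [|| i != 0%N, j != 0%N | k != 0%N] ->
      FT m.-2 (fun t => A t.+1) i * FT n.-2 (fun t => B t.+1) j * FT p.-2 (fun t => C t.+1) k = 0.
    move=> i j k hi hj hk hijk.
    have E : inner (elt m n p (6, i, j, k)%N) (prod3 a b c) = 0.
      by apply: Hl; [rewrite /= hi hj hk | exact: hijk].
    by move: E; rewrite /= inner_prod3 !ip_beta.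
  have [Z|Z|Z|[K1 K2 K3]] := FT_triple (m.-2) (n.-2) (p.-2) (fun t => A t.+1) (fun t => B t.+1)
      (fun t => C t.+1) m2 n2 p2 HF.
  + by rewrite (@at_ZM m Hm A Z).
  + by rewrite (@at_ZM n Hn B Z) orbT.
  + by rewrite (@at_ZM p Hp C Z) !orbT.
  + by rewrite (@at_KM m A K1) (@at_KM n B K2) (@at_KM p C K3) !orbT.
-
  apply/negP => /andP[/andP[sa sb] sc].
  have := Hl (7, 0, 0, 0)%N isT isT; rewrite /= /stopper inner_prod3 !ip_ones => /eqP.
  by rewrite !mulf_eq0 (negbTE (@at_snz m Hm A sa)) (negbTE (@at_snz n Hn B sb)) (negbTE (@at_snz p Hp C sc)).
Qed.

Theorem proposition1 (dA dB dC : nat) :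
  (3 <= dA)%N -> (dA <= dB)%N -> (dB <= dC)%N ->
  is_UPB (UU dA dB dC) /\ size (undup (UU dA dB dC)) = (dA * dB * dC - 8)%N.
Proof.
move=> H1 H2 H3.
have Hm : (2 < dA)%N by [].
have Hn : (2 < dB)%N by apply: leq_trans H2.
have Hp : (2 < dC)%N by apply: leq_trans H3.
set m := dA; set n := dB; set p := dC.
have m1 : (0 < m.-1)%N by rewrite /m; lia.
have n1 : (0 < n.-1)%N by rewrite /n; lia.
have p1 : (0 < p.-1)%N by rewrite /p; lia.
have Hvl : forall l, l \in labs m n p -> valid m n p l /\ nontriv l.
  by move=> l /labs_valid /andP.
have orthL : forall l l', l \in labs m n p -> l' \in labs m n p -> l != l' ->
    inner (elt m n p l) (elt m n p l') = 0.
  move=> l l' hl hl' ne; have [v1 t1] := Hvl l hl; have [v2 t2] := Hvl l' hl'.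
  by apply: orth.
have inj : {in labs m n p &, injective (elt m n p)}.
  move=> l l' hl hl' e; apply/eqP; apply/negPn/negP => ne.
  have [v1 _] := Hvl l hl.
  by have := @selfip m n p l Hm Hn Hp v1; rewrite {2}e orthL // eqxx.
have uU : uniq (UU m n p) by rewrite UU_map map_inj_in_uniq // uniq_labs.
split; last by rewrite undup_id // UU_map size_map size_labs.
split.
-
  move=> u; rewrite UU_map => /mapP[l hl ->]; split.
    apply/eqP => e0; have [v1 _] := Hvl l hl.
    by have := @selfip m n p l Hm Hn Hp v1; rewrite e0 inner0 eqxx.
  exact: elt_prod.
-
  move=> u v; rewrite UU_map => /mapP[l hl ->] /mapP[l' hl' ->] ne.
  apply: orthL => //; apply: contra ne => /eqP ->; exact: eqxx.
-
  move=> Hs.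
  set e0 := elt m n p (0, 0, 0, 0)%N; set e3 := elt m n p (3, 0, 0, 0)%N.
  have v0 : valid m n p (0, 0, 0, 0)%N by rewrite /= !ltn_predRL; lia.
  have v3 : valid m n p (3, 0, 0, 0)%N by rewrite /= !ltn_predRL; lia.
  have Horth : forall u, u \in UU m n p -> inner u (e0 - e3) = 0.
    move=> u; rewrite UU_map => /mapP[l hl ->]; have [vl tl] := Hvl l hl.
    rewrite inner_subr.
    case: l hl vl tl => [[[f i] j] k] hl vl tl.
    case: (f =P 7%N) => [f7|f7].
      move=> {vl tl}; rewrite f7.
      rewrite /e0 /e3 /= /stopper !inner_prod3; ipsimp.
      by rewrite !eqxx subrr.
    rewrite (@orth m n p _ (0,0,0,0)%N Hm Hn Hp vl v0) ?(@orth m n p _ (3,0,0,0)%N Hm Hn Hp vl v3) ?subrr //.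
    all: try first [ by move/eqP => ef; case: f7 | by apply/negP => /eqP [ef ei ej ek]; move: tl; rewrite ef ei ej ek | by [] ].
  have [coef Hc] := Hs (e0 - e3).
  have Z : inner (e0 - e3) (e0 - e3) = 0.
    transitivity (\sum_(i < size (UU m n p)) coef i * inner (e0 - e3) (nth (e0 - e3) (UU m n p) i)).
      rewrite /inner; under eq_bigr => x _ do rewrite {2}Hc mulr_sumr.
      rewrite exchange_big; apply: eq_bigr => i _; rewrite mulr_sumr; apply: eq_bigr => x _.
      by rewrite mulrCA.
    rewrite big1 // => i _; rewrite inner_sym Horth ?conjC0 ?mulr0 //.
    exact: mem_nth.
  move: Z; rewrite !inner_subl !inner_subr.
  rewrite (@orth m n p _ _ Hm Hn Hp v0 v3) // (@orth m n p _ _ Hm Hn Hp v3 v0) //.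
  rewrite /e0 /e3 /= !inner_prod3; ipsimp; rewrite !eqxx subr0 sub0r opprK => /eqP.
  rewrite -mulr2n mulrn_eq0 /= !mulf_eq0 !pnatr_eq0 oner_eq0 /=; lia.
-
  move=> v [vn0 [a [b [c ev]]]].
  case: (boolP (has (fun u => inner u v != 0) (UU m n p))) => [/hasP[u hu hne]|/hasPn Hall].
    by exists u.
  exfalso; subst v.
  have nz : forall d (x : 'I_d -> CC), ~~ [exists y, x y != 0] -> forall y, x y = 0.
    by move=> d x /existsPn H y; apply/eqP; move: (H y); rewrite negbK.
  apply: (@unext m n p a b c Hm Hn Hp).
  + case: (boolP [exists x, a x != 0]) => // /nz Z.
    by move: vn0; rewrite (_ : prod3 a b c = 0) ?eqxx //; apply/ffunP => x; rewrite !ffunE Z !mul0r.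
  + case: (boolP [exists x, b x != 0]) => // /nz Z.
    by move: vn0; rewrite (_ : prod3 a b c = 0) ?eqxx //; apply/ffunP => x; rewrite !ffunE Z mulr0 mul0r.
  + case: (boolP [exists x, c x != 0]) => // /nz Z.
    by move: vn0; rewrite (_ : prod3 a b c = 0) ?eqxx //; apply/ffunP => x; rewrite !ffunE Z mulr0.
  move=> l vl tl; apply/eqP; move: (Hall (elt m n p l)); rewrite negbK; apply.
  by rewrite UU_map map_f // labs_in.
Qed.
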